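(* Let $G$ be a free group and $f:G\to G$ an endomorphism such that for every finitely generated free group $H$ and every homomorphism $g:H\to G$, the composition $f\circ g$ is conjugate to $g$ (i.e. there is $c\in G$ with $f(g(h))=c^{-1}g(h)c$ for all $h\in H$). Then $f$ is conjugate to $\mathrm{id}_G$, i.e. there is $c\in G$ with $f(x)=c^{-1}xc$ for all $x\in G$. *)

(* Defs.v *)
From Stdlib Require Import List.

Record Group := {
  carrier :> Type;
  gmul : carrier -> carrier -> carrier;
  ginv : carrier -> carrier;
  gone : carrier;
  gmulA : forall x y z, gmul x (gmul y z) = gmul (gmul x y) z;
  gmul1l : forall x, gmul gone x = x;
  gmulVl : forall x, gmul (ginv x) x = gone
}.

Arguments gmul {g} _ _.
Arguments ginv {g} _.
Arguments gone {g}.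

Definition is_hom (H G : Group) (g : H -> G) : Prop :=
  forall x y : H, g (gmul x y) = gmul (g x) (g y).

Definition is_free_basis (G : Group) (B : G -> Prop) : Prop :=
  forall (K : Group) (phi : G -> K),
    exists h : G -> K,
      is_hom G K h /\ (forall x, B x -> h x = phi x) /\
      (forall h' : G -> K, is_hom G K h' -> (forall x, B x -> h' x = phi x) ->
         forall x, h' x = h x).

Definition is_free_group (G : Group) : Prop :=
  exists B : G -> Prop, is_free_basis G B.

Definition is_fg_free_group (H : Group) : Prop :=
  exists B : H -> Prop, is_free_basis H B /\
    exists l : list H, forall x, B x -> In x l.

Definition conjg {G : Group} (c x : G) : G := gmul (gmul (ginv c) x) c.

(* Main.v *)
Require Import Defs.
From Stdlib Require Import List Classical ClassicalEpsilon ProofIrrelevance FunctionalExtensionality Lia.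
Import ListNotations.

Section GroupFacts.
Variable G : Group.
Lemma mulA (x y z : G) : gmul x (gmul y z) = gmul (gmul x y) z.
Proof. exact (gmulA G x y z). Qed.
Lemma mul1l (x:G): gmul gone x = x.
Proof. exact (gmul1l G x). Qed.
Lemma mulVl (x:G): gmul (ginv x) x = gone.
Proof. exact (gmulVl G x). Qed.
Lemma mulVr (x : G) : gmul x (ginv x) = gone.
Proof.
  rewrite <- (mul1l (gmul x (ginv x))).
  rewrite <- (mulVl (ginv x)) at 1.
  rewrite <- mulA, (mulA (ginv x) x (ginv x)), mulVl, mul1l. apply mulVl.
Qed.
Lemma mul1r (x : G) : gmul x gone = x.
Proof. rewrite <- (mulVl x), mulA, mulVr, mul1l. reflexivity. Qed.
Lemma mulKl (a x : G) : gmul (ginv a) (gmul a x) = x.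
Proof. rewrite mulA, mulVl, mul1l. reflexivity. Qed.
Lemma mulKr (a x : G) : gmul a (gmul (ginv a) x) = x.
Proof. rewrite mulA, mulVr, mul1l. reflexivity. Qed.
Lemma mulI (a x y : G) : gmul a x = gmul a y -> x = y.
Proof. intro H. rewrite <- (mulKl a x), H, mulKl. reflexivity. Qed.
Lemma invU (x y : G) : gmul x y = gone -> y = ginv x.
Proof. intro H. apply (mulI x). rewrite H, mulVr. reflexivity. Qed.
Lemma invK (x : G) : ginv (ginv x) = x.
Proof. symmetry. apply invU. apply mulVl. Qed.
End GroupFacts.

Lemma hom1 (H K : Group) (h : H -> K) : is_hom H K h -> h gone = gone.
Proof. intro Hh. apply (mulI _ (h gone)). rewrite <- Hh, !mul1r. reflexivity. Qed.
Lemma homV (H K : Group) (h : H -> K) (x : H) : is_hom H K h -> h (ginv x) = ginv (h x).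
Proof. intro Hh. apply invU. rewrite <- Hh, mulVr. apply hom1; auto. Qed.

Lemma sig_ext {A : Type} {P : A -> Prop} (a b : {x | P x}) :
  proj1_sig a = proj1_sig b -> a = b.
Proof.
  destruct a as [a pa], b as [b pb]; simpl; intro E; subst.
  f_equal; apply proof_irrelevance.
Qed.

Section SubGroup.
Variable G : Group.
Variable S : G -> Prop.
Hypothesis S1 : S gone.
Hypothesis SM : forall x y, S x -> S y -> S (gmul x y).
Hypothesis SV : forall x, S x -> S (ginv x).

Definition sub_car := {x : G | S x}.
Definition sub_mul (x y : sub_car) : sub_car :=
  exist _ (gmul (proj1_sig x) (proj1_sig y)) (SM _ _ (proj2_sig x) (proj2_sig y)).
Definition sub_inv (x : sub_car) : sub_car :=
  exist _ (ginv (proj1_sig x)) (SV _ (proj2_sig x)).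
Definition sub_one : sub_car := exist _ gone S1.

Definition SubG : Group.
Proof.
  refine (Build_Group sub_car sub_mul sub_inv sub_one _ _ _).
  - intros; apply sig_ext; simpl; apply mulA.
  - intros; apply sig_ext; simpl; apply mul1l.
  - intros; apply sig_ext; simpl; apply mulVl.
Defined.
End SubGroup.

Section Free.
Variable G : Group.
Variable B : G -> Prop.
Hypothesis HB : is_free_basis G B.

Lemma hom_unique (K : Group) (h1 h2 : G -> K) :
  is_hom G K h1 -> is_hom G K h2 -> (forall e, B e -> h1 e = h2 e) ->
  forall x, h1 x = h2 x.
Proof.
  intros H1 H2 E x.
  destruct (HB K h1) as [h [Hh [Hb Hu]]].
  rewrite (Hu h1 H1 (fun _ _ => eq_refl) x).
  symmetry. apply Hu; auto. intros e Be. rewrite <- E; auto.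
Qed.

Lemma sub_ind (S : G -> Prop) (S1 : S gone)
  (SM : forall x y, S x -> S y -> S (gmul x y))
  (SV : forall x, S x -> S (ginv x)) :
  (forall e, B e -> S e) -> forall x, S x.
Proof.
  intros SB x.
  set (K := SubG G S S1 SM SV).
  set (phi := fun y : G => match excluded_middle_informative (S y) with
                | left p => (exist _ y p : K) | right _ => (sub_one G S S1 : K) end).
  destruct (HB K phi) as [h [Hh [Hb _]]].
  assert (E : forall y, proj1_sig (h y) = y).
  { apply (hom_unique G (fun y => proj1_sig (h y)) (fun y => y)).
    - intros a b. rewrite Hh. reflexivity.
    - intros a b. reflexivity.
    - intros e Be. rewrite Hb; auto. unfold phi.
      destruct (excluded_middle_informative (S e)) as [p|n]; simpl; auto.
      exfalso; auto. }
  rewrite <- (E x). exact (proj2_sig (h x)).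
Qed.
End Free.

Section Restrict.
Variable G : Group.
Variable B : G -> Prop.
Hypothesis HB : is_free_basis G B.
Variable f : G -> G.
Hypothesis Hconj : forall H : Group, is_fg_free_group H ->
     forall g : H -> G, is_hom H G g ->
       exists c : G, forall h : H, f (g h) = conjg c (g h).

Lemma fin_restrict (F : G -> Prop) (FB : forall x, F x -> B x) (l : list G)
  (Fl : forall x, F x -> In x l) :
  exists c, forall x, F x -> f x = conjg c x.
Proof.
  destruct (HB G (fun x => if excluded_middle_informative (F x) then x else gone))
    as [r [Hr [Hrb _]]].
  assert (rF : forall e, F e -> r e = e).
  { intros e Fe. rewrite Hrb by auto.
    destruct (excluded_middle_informative (F e)); tauto. }
  assert (rnF : forall e, B e -> ~ F e -> r e = gone).
  { intros e Be nFe. rewrite Hrb by auto.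
    destruct (excluded_middle_informative (F e)); tauto. }
  assert (r1 : r gone = gone) by (apply hom1; auto).
  assert (rr : forall x, r (r x) = r x).
  { apply (hom_unique G B HB G (fun x => r (r x)) r).
    - intros a b. rewrite !Hr. reflexivity.
    - exact Hr.
    - intros e Be. destruct (classic (F e)) as [Fe|nFe].
      + rewrite (rF e Fe). apply rF; auto.
      + rewrite (rnF e Be nFe). apply r1. }
  assert (S1 : r gone = gone) by exact r1.
  assert (SM : forall x y, r x = x -> r y = y -> r (gmul x y) = gmul x y).
  { intros x y Hx Hy. rewrite Hr, Hx, Hy. reflexivity. }
  assert (SV : forall x, r x = x -> r (ginv x) = ginv x).
  { intros x Hx. rewrite homV, Hx by auto. reflexivity. }
  set (H := SubG G (fun y => r y = y) S1 SM SV).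
  set (r' := fun x : G => (exist _ (r x) (rr x) : H)).
  assert (r'hom : is_hom G H r').
  { intros a b. apply sig_ext. simpl. apply Hr. }
  assert (r'val : forall y : H, r' (proj1_sig y) = y).
  { intros y. apply sig_ext. simpl. exact (proj2_sig y). }
  assert (Hfree : is_free_basis H (fun y => F (proj1_sig y))).
  { intros K phi.
    destruct (HB K (fun x => if excluded_middle_informative (F x) then phi (r' x) else gone))
      as [h0 [Hh0 [Hb0 Hu0]]].
    exists (fun y => h0 (proj1_sig y)). split; [|split].
    - intros a b. apply Hh0.
    - intros y Fy. rewrite Hb0 by auto.
      destruct (excluded_middle_informative (F (proj1_sig y))); [|tauto].
      rewrite r'val. reflexivity.
    - intros h' Hh' Hag y.
      assert (E := Hu0 (fun x => h' (r' x))).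
      rewrite <- (r'val y) at 1. apply E.
      + intros a b. rewrite r'hom. apply Hh'.
      + intros e Be. destruct (excluded_middle_informative (F e)) as [Fe|nFe].
        * apply Hag. simpl. rewrite rF; auto.
        * replace (r' e) with (gone : H). apply hom1; auto.
          apply sig_ext. simpl. symmetry. apply rnF; auto. }
  assert (Hfg : is_fg_free_group H).
  { exists (fun y => F (proj1_sig y)). split; auto.
    exists (map r' l). intros y Fy.
    rewrite <- (r'val y). apply in_map. auto. }
  destruct (Hconj H Hfg (fun y => proj1_sig y) (fun a b => eq_refl)) as [c Hc].
  exists c. intros x Fx.
  specialize (Hc (r' x)). simpl in Hc. rewrite rF in Hc; auto.
Qed.
End Restrict.

Section Action.
Variable G : Group.
Variable B : G -> Prop.

Definition letter := prod (carrier G) bool.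
Definition linv (x : letter) : letter := (fst x, negb (snd x)).
Lemma linvK x : linv (linv x) = x.
Proof. destruct x as [a s]; unfold linv; simpl; rewrite Bool.negb_involutive; reflexivity. Qed.

Fixpoint red (w : list letter) : Prop :=
  match w with
  | nil => True
  | y :: t => red t /\ match t with nil => True | z :: _ => z <> linv y end
  end.
Definition goodw (w : list letter) : Prop := red w /\ Forall (fun y => B (fst y)) w.

Definition L (x : letter) (w : list letter) : list letter :=
  if excluded_middle_informative (B (fst x)) then
    match w with
    | nil => [x]
    | y :: t => if excluded_middle_informative (y = linv x) then t else x :: w
    end
  else w.

Lemma L_good x w : goodw w -> goodw (L x w).
Proof.
  unfold L. destruct (excluded_middle_informative (B (fst x))) as [Bx|]; auto.
  intros [Rw Fw]. destruct w as [|y t].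
  - split; simpl; auto.
  - destruct (excluded_middle_informative (y = linv x)) as [E|E].
    + simpl in Rw. inversion Fw. split; tauto.
    + split.
      * simpl. split; auto.
      * constructor; auto.
Qed.

Lemma L_inv x w : goodw w -> L (linv x) (L x w) = w.
Proof.
  intros [Rw Fw]. unfold L. replace (fst (linv x)) with (fst x) by reflexivity.
  destruct (excluded_middle_informative (B (fst x))) as [Bx|]; auto.
  destruct w as [|y t].
  - destruct (excluded_middle_informative (x = linv (linv x))) as [|n].
    + reflexivity.
    + rewrite linvK in n. tauto.
  - destruct (excluded_middle_informative (y = linv x)) as [E|E].
    + destruct t as [|z t'].
      * subst. reflexivity.
      * simpl in Rw. destruct Rw as [_ Hz].
        destruct (excluded_middle_informative (z = linv (linv x))) as [E2|E2].
        -- rewrite linvK in E2. subst. rewrite linvK in Hz. tauto.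
        -- subst. reflexivity.
    + destruct (excluded_middle_informative (x = linv (linv x))) as [|n].
      * reflexivity.
      * rewrite linvK in n. tauto.
Qed.

Definition RW := {w | goodw w}.

Record perm := { pf : RW -> RW; pb : RW -> RW;
  pfb : forall w, pf (pb w) = w; pbf : forall w, pb (pf w) = w }.

Lemma perm_ext (p q : perm) : (forall w, pf p w = pf q w) -> p = q.
Proof.
  destruct p as [f1 b1 fb1 bf1], q as [f2 b2 fb2 bf2]; simpl; intro E.
  assert (f1 = f2) by (apply functional_extensionality; auto). subst f2.
  assert (b1 = b2).
  { apply functional_extensionality; intro w.
    rewrite <- (fb2 w) at 1. apply bf1. }
  subst b2. f_equal; apply proof_irrelevance.
Qed.

Definition pmul (p q : perm) : perm.
Proof.
  refine {| pf := fun w => pf p (pf q w); pb := fun w => pb q (pb p w) |}.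
  - intro w. rewrite pfb, pfb. reflexivity.
  - intro w. rewrite pbf, pbf. reflexivity.
Defined.
Definition pinv (p : perm) : perm :=
  {| pf := pb p; pb := pf p; pfb := pbf p; pbf := pfb p |}.
Definition pone : perm :=
  {| pf := fun w => w; pb := fun w => w; pfb := fun w => eq_refl; pbf := fun w => eq_refl |}.

Definition PermG : Group.
Proof.
  refine (Build_Group perm pmul pinv pone _ _ _).
  - intros; apply perm_ext; reflexivity.
  - intros; apply perm_ext; reflexivity.
  - intros; apply perm_ext; intro w; simpl. apply pbf.
Defined.

Definition Lp (x : letter) : PermG.
Proof.
  refine {| pf := fun w => exist _ (L x (proj1_sig w)) (L_good x _ (proj2_sig w));
            pb := fun w => exist _ (L (linv x) (proj1_sig w)) (L_good _ _ (proj2_sig w)) |}.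
  - intro w. apply sig_ext; simpl. rewrite <- (linvK x) at 1. apply L_inv. exact (proj2_sig w).
  - intro w. apply sig_ext; simpl. apply L_inv. exact (proj2_sig w).
Defined.

Definition lval (y : letter) : G := if snd y then fst y else ginv (fst y).
Fixpoint ev (w : list letter) : G :=
  match w with nil => gone | y :: t => gmul (lval y) (ev t) end.

Definition M (w v : list letter) : list letter := fold_right L v w.

Lemma M_single (x : letter) (Bx : B (fst x)) : forall w, goodw w ->
  (exists w', w = w' ++ [linv x] /\ M w [x] = w') \/ M w [x] = w ++ [x].
Proof.
  induction w as [|y t IH]; intros [Rw Fw].
  - right. reflexivity.
  - inversion Fw as [|? ? By Ft]; subst. simpl in Rw. destruct Rw as [Rt Hyt].
    destruct (IH (conj Rt Ft)) as [[t' [Et Mt]]|Mt]; simpl; rewrite Mt; unfold L;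
      destruct (excluded_middle_informative (B (fst y))) as [_|]; try tauto.
    + destruct t' as [|z t''].
      * left. exists [y]. simpl in Et. subst. split; reflexivity.
      * destruct (excluded_middle_informative (z = linv y)) as [E|E].
        -- exfalso. rewrite Et in Hyt. simpl in Hyt. tauto.
        -- left. exists (y :: z :: t''). rewrite Et. split; reflexivity.
    + destruct t as [|z t''].
      * simpl. destruct (excluded_middle_informative (x = linv y)) as [E|E].
        -- left. exists []. split; [|reflexivity]. rewrite E, linvK. reflexivity.
        -- right. reflexivity.
      * simpl. destruct (excluded_middle_informative (z = linv y)) as [E|E].
        -- tauto.
        -- right. reflexivity.
Qed.

Lemma head_lemma (a : G) (Ba : B a) (w : list letter) (Gw : goodw w) :
  M w [(a, true)] = L (a, true) w -> forall y t, w = y :: t -> fst y = a.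
Proof.
  intros E y t Ew. change (M w [((a, true) : letter)] = L (a, true) w) in E.
  destruct (M_single (a, true) Ba w Gw) as [[w' [E1 E2]]|E2]; rewrite E2 in E;
    unfold L in E; simpl in E;
    destruct (excluded_middle_informative (B a)) as [_|]; try tauto; subst w;
    destruct (excluded_middle_informative (y = linv (a, true))) as [Ey|Ey];
    try (rewrite Ey; reflexivity).
  - exfalso. subst w'. assert (C := f_equal (@length _) E1).
    rewrite length_app in C. simpl in C. lia.
  - simpl in E. inversion E. reflexivity.
Qed.

Variable psi : G -> PermG.
Hypothesis psi_hom : is_hom G PermG psi.
Hypothesis psi_B : forall e, B e -> psi e = Lp (e, true).
Hypothesis HB : is_free_basis G B.

Lemma ev_psi : forall u (v : RW), ev (proj1_sig (pf (psi u) v)) = gmul u (ev (proj1_sig v)).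
Proof.
  apply (sub_ind G B HB (fun u => forall v : RW, ev (proj1_sig (pf (psi u) v)) = gmul u (ev (proj1_sig v)))).
  - intro v. rewrite (hom1 G PermG psi psi_hom). simpl. rewrite mul1l. reflexivity.
  - intros x y Hx Hy v. rewrite psi_hom. simpl. rewrite Hx, Hy, mulA. reflexivity.
  - intros x Hx v. rewrite (homV G PermG psi x psi_hom). simpl.
    set (v' := pb (psi x) v).
    assert (E := Hx v'). unfold v' in E at 1. rewrite pfb in E.
    rewrite E, mulKl. reflexivity.
  - intros e Be v. rewrite psi_B by auto. simpl. unfold L; simpl.
    destruct (excluded_middle_informative (B e)) as [_|]; [|tauto].
    destruct v as [[|y t] Gv]; simpl; [reflexivity|].
    destruct (excluded_middle_informative (y = linv (e, true))) as [Ey|Ey].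
    + subst y. simpl. unfold lval; simpl. rewrite mulKr. reflexivity.
    + reflexivity.
Qed.

Lemma psi_ev : forall w, Forall (fun y => B (fst y)) w ->
  forall v : RW, proj1_sig (pf (psi (ev w)) v) = M w (proj1_sig v).
Proof.
  induction w as [|y t IH]; intros Fw v.
  - simpl ev. rewrite (hom1 G PermG psi psi_hom). reflexivity.
  - inversion Fw as [|? ? By Ft]; subst. simpl ev. rewrite psi_hom.
    simpl. rewrite <- IH by auto.
    destruct y as [x s]; unfold lval; simpl in *. destruct s.
    + rewrite psi_B by auto. reflexivity.
    + rewrite (homV G PermG psi x psi_hom), psi_B by auto. reflexivity.
Qed.

Definition nilRW : RW := exist _ [] (conj I (Forall_nil _)).

Lemma centralizer (a b u : G) : B a -> B b -> a <> b ->
  gmul u a = gmul a u -> gmul u b = gmul b u -> u = gone.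
Proof.
  intros Ba Bb nab Ea Eb.
  set (w := proj1_sig (pf (psi u) nilRW)).
  assert (Gw : goodw w) by exact (proj2_sig (pf (psi u) nilRW)).
  assert (evw : ev w = u).
  { unfold w. rewrite ev_psi. apply mul1r. }
  assert (key : forall x, B x -> gmul u x = gmul x u -> forall y t, w = y :: t -> fst y = x).
  { intros x Bx Ex. apply head_lemma; auto.
    assert (E1 := f_equal (fun p => proj1_sig (pf p nilRW)) (f_equal psi Ex)).
    simpl in E1. rewrite !psi_hom in E1. simpl in E1.
    rewrite <- evw in E1 at 1. rewrite psi_ev in E1 by (destruct Gw; auto).
    rewrite psi_B in E1 by auto. simpl in E1. replace (L (x, true) []) with [((x, true) : letter)] in E1 by (unfold L; simpl; destruct (excluded_middle_informative (B x)); tauto). exact E1. }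
  destruct w as [|y t] eqn:Ew.
  - rewrite <- evw. reflexivity.
  - exfalso. apply nab. rewrite <- (key a Ba Ea y t eq_refl). apply (key b Bb Eb y t eq_refl).
Qed.
End Action.

Lemma conj_hom (G : Group) (c : G) : is_hom G G (conjg c).
Proof. intros x y. unfold conjg. rewrite <- !mulA, mulKr. reflexivity. Qed.

Lemma conj_eq_comm (G : Group) (c c' x : G) : conjg c x = conjg c' x ->
  gmul (gmul c' (ginv c)) x = gmul x (gmul c' (ginv c)).
Proof.
  unfold conjg. intro H.
  assert (H2 := f_equal (fun z => gmul c' (gmul z (ginv c))) H). simpl in H2.
  rewrite <- !mulA in H2. rewrite mulKr in H2. rewrite mulVr, mul1r in H2.
  rewrite <- !mulA. exact H2.
Qed.

Theorem lemma5p5 (G : Group) (HG : is_free_group G) (f : G -> G)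
  (hf : is_hom G G f)
  (Hconj : forall H : Group, is_fg_free_group H ->
     forall g : H -> G, is_hom H G g ->
       exists c : G, forall h : H, f (g h) = conjg c (g h)) :
  exists c : G, forall x : G, f x = conjg c x.
Proof.
  destruct HG as [B HB].
  assert (fin : forall c, (forall e, B e -> f e = conjg c e) -> forall x, f x = conjg c x).
  { intros c Hc. apply (hom_unique G B HB G f (conjg c) hf (conj_hom G c) Hc). }
  destruct (classic (exists a b, B a /\ B b /\ a <> b)) as [[a [b [Ba [Bb nab]]]]|N].
  - destruct (HB (PermG G B) (fun x => Lp G B (x, true))) as [psi [Hpsi [Hpsib _]]].
    destruct (fin_restrict G B HB f Hconj (fun x => B x /\ (x = a \/ x = b))
       (fun x H => proj1 H) [a; b]) as [c Hc].
    { intros x [_ [->| ->]]; simpl; auto. }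
    exists c. apply fin. intros e Be.
    destruct (fin_restrict G B HB f Hconj (fun x => B x /\ (x = a \/ x = b \/ x = e))
       (fun x H => proj1 H) [a; b; e]) as [c' Hc'].
    { intros x [_ [->|[->| ->]]]; simpl; auto. }
    assert (Ca := conj_eq_comm G c c' a). assert (Cb := conj_eq_comm G c c' b).
    rewrite <- Hc, <- Hc' in Ca, Cb by auto.
    assert (U := centralizer G B psi Hpsi Hpsib HB a b _ Ba Bb nab (Ca eq_refl) (Cb eq_refl)).
    assert (E : c = c').
    { apply invU in U. rewrite <- (invK G c), U, invK. reflexivity. }
    subst c'. apply Hc'. auto.
  - destruct (classic (exists e0, B e0)) as [[e0 Be0]|N2].
    + destruct (fin_restrict G B HB f Hconj B (fun x H => H) [e0]) as [c Hc].
      { intros x Bx. left. apply NNPP. intro ne. apply N. exists e0, x. auto. }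
      exists c. apply fin. exact Hc.
    + destruct (fin_restrict G B HB f Hconj B (fun x H => H) []) as [c Hc].
      { intros x Bx. exfalso. apply N2. eauto. }
      exists c. apply fin. exact Hc.
Qed.
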